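(* Let $g>0$, $\gamma>0$, $a\in(0,\nu_1)$, and let $\hat\nu:\mathbb R\to[\nu_0,\nu_1]$ be a stretch-limiting constitutive function as in the context. Let $(\lambda,\mu)$ with $\lambda>0$ be the unique solution of $$a\mathbf i+0\,\mathbf k=\int_0^1\frac{\hat\nu(\delta(s))}{\delta(s)}\big(\lambda\mathbf i+(\mu+g\gamma s)\mathbf k\big)\,ds,\qquad \delta(s)=\sqrt{\lambda^2+(\mu+g\gamma s)^2}$$ (the tensile uniform catenary with supports at $\mathbf 0$ and $a\mathbf i$, with tension $N(s)=\delta(s)$). Then the catenary is inextensible, i.e. $\delta(s)\ge N_1$ for all $s\in[0,1]$ (equivalently stretch $\nu\equiv\nu_1$), if and only if $$\nu_1\frac{2N_1}{g\gamma}\sinh^{-1}\frac{g\gamma}{2N_1}\le a<\nu_1.$$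
   Context: Stretch-limited constitutive function: constants $N_0<0<N_1$, $0<\nu_0<1<\nu_1$ with $\hat\nu(N)=\nu_0$ for $N\le N_0$, $\hat\nu(N)=\nu_1$ for $N\ge N_1$, $\hat\nu\in C^\infty([N_0,N_1];[\nu_0,\nu_1])$, $\hat\nu(0)=1$, $\hat\nu'\ge c>0$ on $[N_0,N_1]$. The string is uniform with mass $\gamma$ per unit reference length, parametrized by $s\in[0,1]$, with $\mathbf r(0)=\mathbf 0$, $\mathbf r(1)=a\mathbf i$, contact force $\mathbf n(s)=\lambda\mathbf i+(\mu+g\gamma s)\mathbf k$, and stretch $|\mathbf r_s|=\hat\nu(N)$. It is a known fact (existence and uniqueness of tensile states) that for $a>0$, $a^2<\nu_1^2$ there is exactly one solution $(\lambda,\mu)$ of the displayed equation with $\lambda>0$; for it one has $\mu=-g\gamma/2$. *)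

(* Defs.v *)
From Stdlib Require Import Reals.
From Coquelicot Require Import Coquelicot.
Open Scope R_scope.

Definition arsinh (x : R) : R := ln (x + sqrt (x ^ 2 + 1)).

(* Stretch-limited constitutive function as in the context.
   C^infinity on [N0,N1] is rendered as: the restriction to [N0,N1] of a
   function smooth on all of R. *)
Definition stretch_limited (nu : R -> R) (N0 N1 nu0 nu1 c : R) : Prop :=
  N0 < 0 < N1 /\ 0 < nu0 < 1 /\ 1 < nu1 /\ 0 < c /\
  (forall N, N <= N0 -> nu N = nu0) /\
  (forall N, N1 <= N -> nu N = nu1) /\
  (forall N, N0 <= N <= N1 -> nu0 <= nu N <= nu1) /\
  nu 0 = 1 /\
  (exists phi : R -> R,
      (forall n x, ex_derive_n phi n x) /\
      (forall N, N0 <= N <= N1 -> nu N = phi N) /\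
      (forall N, N0 <= N <= N1 -> c <= Derive phi N)).

Definition tension (g gam lam mu s : R) : R :=
  sqrt (lam ^ 2 + (mu + g * gam * s) ^ 2).

(* Main.v *)
Require Import Defs.
From Stdlib Require Import Reals Lra Psatz.
From Coquelicot Require Import Coquelicot.
Open Scope R_scope.

Lemma sinh_opp y : sinh (- y) = - sinh y.
Proof. unfold sinh; rewrite Ropp_involutive; lra. Qed.

Lemma arcsinh_opp x : arcsinh (- x) = - arcsinh x.
Proof.
  rewrite <- (sinh_arcsinh x) at 1. rewrite <- sinh_opp. apply arcsinh_sinh.
Qed.

Lemma cosh_ge1 z : 1 <= cosh z.
Proof.
  unfold cosh. rewrite exp_Ropp. pose proof (exp_pos z).
  set (p := exp z) in *.
  assert (p + / p - 2 = (p - 1)^2 / p) by (field; lra).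
  assert (0 <= (p-1)^2 / p) by (unfold Rdiv; apply Rmult_le_pos; [apply pow2_ge_0 | left; apply Rinv_0_lt_compat; lra]).
  lra.
Qed.

Lemma sinh_diff A B : sinh A - sinh B = 2 * cosh ((A+B)/2) * sinh ((A-B)/2).
Proof.
  unfold sinh, cosh.
  set (P := exp ((A+B)/2)). set (Q := exp ((A-B)/2)).
  assert (HP : 0 < P) by apply exp_pos. assert (HQ : 0 < Q) by apply exp_pos.
  assert (E1 : exp A = P * Q) by (unfold P, Q; rewrite <- exp_plus; f_equal; field).
  assert (E2 : exp B = P / Q) by (unfold P, Q; unfold Rdiv; rewrite <- exp_Ropp, <- exp_plus; f_equal; field).
  rewrite !exp_Ropp, E1, E2. fold P Q. field; lra.
Qed.

Lemma sinh_nonneg z : 0 <= z -> 0 <= sinh z.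
Proof.
  intros H. destruct (Req_dec z 0) as [->|]. rewrite sinh_0; lra.
  rewrite <- sinh_0. left. apply sinh_lt. lra.
Qed.

Lemma arcsinh_gap u K : 0 <= K -> arcsinh (u + K) - arcsinh u <= 2 * arcsinh (K/2).
Proof.
  intros HK.
  set (A := arcsinh (u+K)). set (B := arcsinh u).
  assert (HAB : B <= A) by (apply arcsinh_le; lra).
  assert (E : sinh A - sinh B = K) by (unfold A, B; rewrite !sinh_arcsinh; lra).
  rewrite sinh_diff in E.
  pose proof (cosh_ge1 ((A+B)/2)).
  assert (0 <= sinh ((A-B)/2)) by (apply sinh_nonneg; lra).
  assert (sinh ((A-B)/2) <= K/2) by nra.
  destruct (Rle_dec ((A-B)/2) (arcsinh (K/2))). lra.
  exfalso. assert (sinh (arcsinh (K/2)) < sinh ((A-B)/2)) by (apply sinh_lt; lra).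
  rewrite sinh_arcsinh in H2. lra.
Qed.

Lemma sqrt_sq1_pos t : 0 < sqrt (t^2+1).
Proof. apply sqrt_lt_R0. nra. Qed.

Lemma D_pos x : 0 < x -> x / sqrt (x^2+1) < arcsinh x.
Proof.
  intros Hx.
  destruct (MVT_cor2 (fun t => arcsinh t - t / sqrt (t^2+1))
     (fun t => t^2 / (sqrt (t^2+1) * (t^2+1))) 0 x Hx) as [c [Hc1 Hc2]].
  { intros c _. apply is_derive_Reals.
    assert (H1 : is_derive arcsinh c (/ sqrt (c^2+1))) by (apply is_derive_Reals, derivable_pt_lim_arcsinh).
    pose proof (sqrt_sq1_pos c).
    assert (H2 : is_derive (fun t => t / sqrt (t^2+1)) c (/ (sqrt (c^2+1) * (c^2+1)))).
    { assert (E : sqrt (c^2+1) * sqrt (c^2+1) = c^2+1) by (apply sqrt_sqrt; nra).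
      auto_derive. replace (c * (c * 1) + 1) with (c^2+1) by ring. repeat split; nra.
      replace (c * (c * 1) + 1) with (c^2+1) by ring.
      rewrite E. field. split; nra. }
    replace (c^2 / (sqrt (c^2+1) * (c^2+1))) with (/ sqrt (c^2+1) - / (sqrt (c^2+1) * (c^2+1))).
    apply (is_derive_minus _ _ _ _ _ H1 H2).
    field. split; nra. }
  rewrite arcsinh_0 in Hc1.
  replace (0/sqrt (0^2+1)) with 0 in Hc1 by (unfold Rdiv; ring).
  pose proof (sqrt_sq1_pos c).
  assert (0 < c^2 / (sqrt (c^2+1) * (c^2+1))).
  { apply Rdiv_lt_0_compat. nra. apply Rmult_lt_0_compat; nra. }
  nra.
Qed.

Lemma Q_strict x y : 0 < x -> x < y -> arcsinh y / y < arcsinh x / x.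
Proof.
  intros Hx Hxy.
  destruct (MVT_cor2 (fun t => arcsinh t / t)
     (fun t => (/ sqrt (t^2+1) * t - arcsinh t * 1) / t^2) x y Hxy) as [c [Hc1 Hc2]].
  { intros c Hc. apply is_derive_Reals. apply is_derive_div.
    apply is_derive_Reals, derivable_pt_lim_arcsinh. apply (is_derive_id (K:=R_AbsRing)). lra. }
  assert (Hc : 0 < c) by lra.
  pose proof (D_pos c Hc).
  assert ((/ sqrt (c^2+1) * c - arcsinh c * 1) / c^2 < 0).
  { apply Rlt_div_l. nra. rewrite Rmult_0_l.
    replace (/ sqrt (c^2+1) * c) with (c / sqrt (c^2+1)) by (unfold Rdiv; ring). lra. }
  nra.
Qed.

Lemma sqrt_scale lam h : 0 < lam -> sqrt (lam^2 + h^2) = lam * sqrt ((h/lam)^2 + 1).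
Proof.
  intros Hl.
  replace (lam^2 + h^2) with (lam^2 * ((h/lam)^2+1)) by (field; lra).
  rewrite sqrt_mult_alt by nra. rewrite sqrt_pow2 by lra. reflexivity.
Qed.

Lemma pos_sum lam h : 0 < lam -> 0 < lam^2 + h^2.
Proof. intros; nra. Qed.

Lemma T_pos lam h : 0 < lam -> 0 < sqrt (lam^2 + h^2).
Proof. intros; apply sqrt_lt_R0; nra. Qed.

Lemma T_ge lam h : 0 < lam -> lam <= sqrt (lam^2 + h^2).
Proof. intros. rewrite <- (sqrt_pow2 lam) at 1 by lra. apply sqrt_le_1_alt. nra. Qed.

Lemma int_lamT lam mu k : 0 < lam -> 0 < k ->
  is_RInt (fun s => lam / sqrt (lam^2 + (mu + k*s)^2)) 0 1
    (lam / k * (arcsinh ((mu + k) / lam) - arcsinh (mu / lam))).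
Proof.
  intros Hl Hk.
  set (f := fun s => lam / k * arcsinh ((mu + k*s)/lam)).
  assert (H := is_RInt_derive f (fun s => lam / sqrt (lam^2 + (mu + k*s)^2)) 0 1).
  replace (lam / k * (arcsinh ((mu + k) / lam) - arcsinh (mu / lam))) with (minus (f 1) (f 0)).
  2:{ unfold f, minus, plus, opp; simpl. replace (mu + k*1) with (mu+k) by ring.
      replace (mu + k*0) with mu by ring. ring. }
  apply H.
  - intros x _. unfold f.
    assert (Hi : is_derive (fun s => (mu + k*s)/lam) x (k/lam)).
    { auto_derive. lra. field. lra. }
    assert (Ha : is_derive arcsinh ((mu + k*x)/lam) (/ sqrt (((mu+k*x)/lam)^2+1)))
      by apply is_derive_Reals, derivable_pt_lim_arcsinh.
    pose proof (is_derive_comp arcsinh (fun s => (mu + k*s)/lam) x _ _ Ha Hi) as Hc.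
    pose proof (is_derive_scal _ _ (lam/k) _ Hc) as Hs.
    replace (lam / sqrt (lam ^ 2 + (mu + k * x) ^ 2)) with (lam / k * scal (k/lam) (/ sqrt (((mu + k * x) / lam) ^ 2 + 1))).
    exact Hs.
    rewrite sqrt_scale by lra.
    assert (0 < sqrt (((mu + k * x) / lam) ^ 2 + 1)) by (apply sqrt_lt_R0; pose proof (pow2_ge_0 ((mu + k * x) / lam)); lra).
    set (S := sqrt (((mu + k * x) / lam) ^ 2 + 1)) in *. unfold scal; simpl; unfold mult; simpl. field. repeat split; lra.
  - intros x _. apply (ex_derive_continuous (fun s => lam / sqrt (lam^2 + (mu + k*s)^2))). auto_derive.
    pose proof (T_pos lam (mu + k*x) Hl).
    replace ((mu + k * x) * ((mu + k * x) * 1)) with ((mu+k*x)^2) by ring.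
    replace (lam * (lam * 1)) with (lam^2) by ring. assert (0 < lam ^ 2 + (mu + k * x) ^ 2) by (pose proof (pow2_ge_0 (mu+k*x)); pose proof (pow_lt lam 2 Hl); lra). repeat split; lra.
Qed.

Lemma int_hT lam mu k : 0 < lam -> 0 < k ->
  is_RInt (fun s => (mu + k*s) / sqrt (lam^2 + (mu + k*s)^2)) 0 1
    ((sqrt (lam^2 + (mu+k)^2) - sqrt (lam^2 + mu^2)) / k).
Proof.
  intros Hl Hk.
  set (f := fun s => sqrt (lam^2 + (mu + k*s)^2) / k).
  assert (H := is_RInt_derive f (fun s => (mu + k*s) / sqrt (lam^2 + (mu + k*s)^2)) 0 1).
  replace ((sqrt (lam^2 + (mu+k)^2) - sqrt (lam^2 + mu^2)) / k) with (minus (f 1) (f 0)).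
  2:{ unfold f, minus, plus, opp; simpl. replace (mu + k*1) with (mu+k) by ring.
      replace (mu + k*0) with mu by ring. field. lra. }
  apply H.
  - intros x _. unfold f.
    pose proof (T_pos lam (mu + k*x) Hl).
    auto_derive.
    replace ((mu + k * x) * ((mu + k * x) * 1)) with ((mu+k*x)^2) by ring.
    replace (lam * (lam * 1)) with (lam^2) by ring. apply pos_sum; lra.
    replace ((mu + k * x) * ((mu + k * x) * 1)) with ((mu+k*x)^2) by ring.
    replace (lam * (lam * 1)) with (lam^2) by ring. field. lra.
  - intros x _. apply (ex_derive_continuous (fun s => (mu + k*s) / sqrt (lam^2 + (mu + k*s)^2))). auto_derive.
    pose proof (T_pos lam (mu + k*x) Hl).
    replace ((mu + k * x) * ((mu + k * x) * 1)) with ((mu+k*x)^2) by ring.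
    replace (lam * (lam * 1)) with (lam^2) by ring. assert (0 < lam ^ 2 + (mu + k * x) ^ 2) by (pose proof (pow2_ge_0 (mu+k*x)); pose proof (pow_lt lam 2 Hl); lra). repeat split; lra.
Qed.

Theorem proposition4p2
  (nu : R -> R) (N0 N1 nu0 nu1 c g gam a lam mu : R) :
  stretch_limited nu N0 N1 nu0 nu1 c ->
  0 < g -> 0 < gam -> 0 < a < nu1 ->
  0 < lam ->
  is_RInt (fun s => nu (tension g gam lam mu s) / tension g gam lam mu s * lam)
    0 1 a ->
  is_RInt (fun s => nu (tension g gam lam mu s) / tension g gam lam mu s
                    * (mu + g * gam * s))
    0 1 0 ->
  ((forall s, 0 <= s <= 1 -> N1 <= tension g gam lam mu s) <->
   (nu1 * (2 * N1 / (g * gam)) * arsinh (g * gam / (2 * N1)) <= a /\ a < nu1)).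
Proof.
  assert (scal_R : forall r x : R, scal r x = r * x) by reflexivity.
  intros [HN [Hnu0 [Hnu1 [Hc [Hlo [Hhi [Hmid [H0 _]]]]]]]] Hg Hgam Ha Hl I1 I2.
  assert (Hk : 0 < g * gam) by (apply Rmult_lt_0_compat; lra).
  assert (Hle : forall N, nu N <= nu1).
  { intro N. destruct (Rle_dec N N0). rewrite Hlo; lra.
    destruct (Rle_dec N1 N). rewrite Hhi; lra. apply Hmid; lra. }
  unfold tension in *. change arsinh with arcsinh.
  set (k := g * gam) in *.
  assert (Hy : 0 < k / (2 * N1)) by (apply Rdiv_lt_0_compat; lra).
  replace (nu1 * (2 * N1 / k) * arcsinh (k / (2 * N1)))
    with (nu1 * (arcsinh (k / (2 * N1)) / (k / (2 * N1)))) by (field; lra).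
  assert (Hx : 0 < k / (2 * lam)) by (apply Rdiv_lt_0_compat; lra).
  pose proof (int_lamT lam mu k Hl Hk) as J1.
  split.
  - intro Hall. split; [|lra].
    assert (J2 := is_RInt_scal _ _ _ nu1 _ (int_hT lam mu k Hl Hk)).
    assert (J2' : is_RInt (fun s => nu (sqrt (lam ^ 2 + (mu + k * s) ^ 2)) /
              sqrt (lam ^ 2 + (mu + k * s) ^ 2) * (mu + k * s)) 0 1
              (scal nu1 ((sqrt (lam^2 + (mu+k)^2) - sqrt (lam^2 + mu^2)) / k))).
    { eapply is_RInt_ext; [|exact J2]. intros x Hx'.
      rewrite Rmin_left, Rmax_right in Hx' by lra.
      rewrite Hhi by (apply Hall; lra).
      pose proof (T_pos lam (mu + k*x) Hl).
      unfold scal; simpl; unfold mult; simpl. unfold Rdiv; ring. }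
    apply (is_RInt_unique (V:=R_CompleteNormedModule)) in J2'. apply (is_RInt_unique (V:=R_CompleteNormedModule)) in I2. rewrite I2 in J2'.
    rewrite scal_R in J2'.
    assert (Esq : sqrt (lam^2 + (mu+k)^2) = sqrt (lam^2 + mu^2)).
    { assert ((sqrt (lam^2 + (mu+k)^2) - sqrt (lam^2 + mu^2)) / k = 0).
      { apply (Rmult_eq_reg_l nu1). rewrite Rmult_0_r; symmetry; exact J2'. lra. }
      assert (sqrt (lam^2 + (mu+k)^2) - sqrt (lam^2 + mu^2) = 0).
      { replace (sqrt (lam^2 + (mu+k)^2) - sqrt (lam^2 + mu^2)) with
          (((sqrt (lam^2 + (mu+k)^2) - sqrt (lam^2 + mu^2)) / k) * k) by (field; lra).
        rewrite H; ring. }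
      lra. }
    apply sqrt_inj in Esq; [| pose proof (pos_sum lam (mu+k) Hl); lra | pose proof (pos_sum lam mu Hl); lra].
    assert (Hmu : mu = - k / 2).
    { assert (k * (2 * mu + k) = 0) by nra.
      apply Rmult_integral in H. destruct H; lra. }
    assert (J1' := is_RInt_scal _ _ _ nu1 _ J1).
    assert (J1'' : is_RInt (fun s => nu (sqrt (lam ^ 2 + (mu + k * s) ^ 2)) /
              sqrt (lam ^ 2 + (mu + k * s) ^ 2) * lam) 0 1
              (scal nu1 (lam / k * (arcsinh ((mu + k) / lam) - arcsinh (mu / lam))))).
    { eapply is_RInt_ext; [|exact J1']. intros x Hx'.
      rewrite Rmin_left, Rmax_right in Hx' by lra.
      rewrite Hhi by (apply Hall; lra).
      pose proof (T_pos lam (mu + k*x) Hl).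
      unfold scal; simpl; unfold mult; simpl. unfold Rdiv; ring. }
    apply (is_RInt_unique (V:=R_CompleteNormedModule)) in J1''. apply (is_RInt_unique (V:=R_CompleteNormedModule)) in I1. rewrite I1 in J1''.
    rewrite scal_R in J1''.
    replace ((mu + k) / lam) with (k / (2 * lam)) in J1'' by (rewrite Hmu; field; lra).
    replace (mu / lam) with (- (k / (2 * lam))) in J1'' by (rewrite Hmu; field; lra).
    rewrite arcsinh_opp in J1''.
    replace (nu1 * (lam / k * (arcsinh (k / (2 * lam)) - - arcsinh (k / (2 * lam)))))
      with (nu1 * (arcsinh (k / (2 * lam)) / (k / (2 * lam)))) in J1'' by (field; lra).
    assert (HlN : N1 <= lam).
    { pose proof (Hall (1/2) ltac:(lra)).
      replace (mu + k * (1/2)) with 0 in H by (rewrite Hmu; field).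
      replace (lam ^ 2 + 0 ^ 2) with (lam ^ 2) in H by ring.
      rewrite sqrt_pow2 in H by lra. exact H. }
    rewrite J1''. apply Rmult_le_compat_l. lra.
    destruct (Req_dec lam N1) as [->|Hne]. lra.
    left. apply Q_strict. exact Hx.
    apply Rmult_lt_compat_l. exact Hk. apply Rinv_lt_contravar. nra. lra.
  - intros [Hb _] s Hs.
    destruct (Rle_dec N1 (sqrt (lam ^ 2 + (mu + k * s) ^ 2))) as [r|r]. exact r.
    exfalso.
    pose proof (T_ge lam (mu + k * s) Hl) as HT.
    assert (HlN : lam < N1) by lra.
    assert (J1' := is_RInt_scal _ _ _ nu1 _ J1).
    assert (Hle2 : a <= nu1 * (lam / k * (arcsinh ((mu + k) / lam) - arcsinh (mu / lam)))).
    { assert (E1 := is_RInt_unique (V:=R_CompleteNormedModule) _ _ _ _ J1').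
      assert (E2 := is_RInt_unique (V:=R_CompleteNormedModule) _ _ _ _ I1).
      assert (E1' : RInt (fun s => nu1 * (lam / sqrt (lam ^ 2 + (mu + k * s) ^ 2))) 0 1 =
        nu1 * (lam / k * (arcsinh ((mu + k) / lam) - arcsinh (mu / lam)))) by exact E1.
      rewrite <- E1', <- E2. apply RInt_le. lra.
      eexists; exact I1. eexists; exact J1'.
      intros x Hx'.
      pose proof (T_pos lam (mu + k*x) Hl).
      pose proof (Hle (sqrt (lam ^ 2 + (mu + k * x) ^ 2))).
      replace (nu1 * (lam / sqrt (lam ^ 2 + (mu + k * x) ^ 2))) with
        (nu1 / sqrt (lam ^ 2 + (mu + k * x) ^ 2) * lam) by (field; lra).
      apply Rmult_le_compat_r. lra.
      apply Rmult_le_compat_r. left; apply Rinv_0_lt_compat; lra. exact H1. }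
    pose proof (arcsinh_gap (mu / lam) (k / lam) ltac:(apply Rlt_le, Rdiv_lt_0_compat; lra)) as G.
    replace (mu / lam + k / lam) with ((mu + k) / lam) in G by (field; lra).
    replace (k / lam / 2) with (k / (2 * lam)) in G by (field; lra).
    assert (Hlt : arcsinh (k / (2 * lam)) / (k / (2 * lam)) < arcsinh (k / (2 * N1)) / (k / (2 * N1))).
    { apply Q_strict. exact Hy. apply Rmult_lt_compat_l. exact Hk. apply Rinv_lt_contravar. nra. lra. }
    assert (a <= nu1 * (arcsinh (k / (2 * lam)) / (k / (2 * lam)))).
    { eapply Rle_trans. exact Hle2.
      replace (nu1 * (arcsinh (k / (2 * lam)) / (k / (2 * lam)))) with
        (nu1 * (lam / k * (2 * arcsinh (k / (2 * lam))))) by (field; lra).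
      apply Rmult_le_compat_l. lra. apply Rmult_le_compat_l.
      left; apply Rdiv_lt_0_compat; lra. exact G. }
    assert (nu1 * (arcsinh (k / (2 * lam)) / (k / (2 * lam))) < nu1 * (arcsinh (k / (2 * N1)) / (k / (2 * N1)))).
    { apply Rmult_lt_compat_l. lra. exact Hlt. }
    lra.
Qed.
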